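(* (Completeness) Every valid sequent of $\text{HXPath}_{\rm D}$ is provable in the sequent calculus $\mathbf{G}$.
   Context: Syntax of $\text{HXPath}_{\rm D}$: fix pairwise disjoint sets $\mathsf{Prop}$ (propositions, countably infinite), $\mathsf{Nom}$ (nominals, countably infinite), $\mathsf{Mod}$ (modalities, finite), $\mathsf{Cmp}$ (comparisons, finite). Path expressions $\alpha,\beta ::= \mathsf{a} \mid i{:} \mid \varphi? \mid \alpha\beta$ and node expressions $\varphi,\psi ::= p \mid i \mid \bot \mid \varphi\to\psi \mid @_i\varphi \mid \langle \mathsf{a}\rangle\varphi \mid \langle\alpha =_{\mathsf{c}} \beta\rangle \mid \langle \alpha\neq_{\mathsf{c}}\beta\rangle$, with $p\in\mathsf{Prop}$, $i\in\mathsf{Nom}$, $\mathsf{a}\in\mathsf{Mod}$, $\mathsf{c}\in\mathsf{Cmp}$. Abbreviations: $\top:=\bot\to\bot$, $\neg\varphi:=\varphi\to\bot$, $\varphi\lor\psi := \neg\varphi\to\psi$, $\varphi\land\psi:=\neg(\varphi\to\neg\psi)$; $\epsilon:=\top?$; $\langle j{:}\rangle\varphi := @_j\varphi$, $\langle\psi?\rangle\varphi:=\psi\land\varphi$, $\langle\alpha\beta\rangle\varphi:=\langle\alpha\rangle\langle\beta\rangle\varphi$. The symbol $\blacktriangle$ stands for either $=_{\mathsf{c}}$ or $\neq_{\mathsf{c}}$ (for some $\mathsf{c}$). Models: $\mathcal{M}=\langle N,\{R_{\mathsf a}\}_{\mathsf a\in\mathsf{Mod}},\{\approx_{\mathsf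 c}\}_{\mathsf c\in\mathsf{Cmp}},g,V\rangle$ with $N\neq\emptyset$, each $R_{\mathsf a}\subseteq N\times N$, each $\approx_{\mathsf c}$ an equivalence relation on $N$, $g:\mathsf{Nom}\to N$, $V:\mathsf{Prop}\to 2^N$. Semantics: $\mathcal M,n,n'\Vdash \mathsf a$ iff $nR_{\mathsf a}n'$; $\mathcal M,n,n'\Vdash i{:}$ iff $g(i)=n'$; $\mathcal M,n,n'\Vdash\varphi?$ iff $n=n'$ and $\mathcal M,n\Vdash\varphi$; $\mathcal M,n,n'\Vdash\alpha\beta$ iff there is $n''$ with $\mathcal M,n,n''\Vdash\alpha$ and $\mathcal M,n'',n'\Vdash\beta$; $\mathcal M,n\Vdash p$ iff $n\in V(p)$; $\mathcal M,n\Vdash i$ iff $g(i)=n$; $\bot$ never holds; $\to$ classical; $\mathcal M,n\Vdash @_i\varphi$ iff $\mathcal M,g(i)\Vdash\varphi$; $\mathcal M,n\Vdash\langle\mathsf a\rangle\varphi$ iff some $n'$ has $nR_{\mathsf a}n'$ and $\mathcal M,n'\Vdash\varphi$; $\mathcal M,n\Vdash\langle\alpha=_{\mathsf c}\beta\rangle$ (resp. $\langle\alpha\neq_{\mathsf c}\beta\rangle$) iff there are $n',n''$ with $\mathcal M,n,n'\Vdash\alpha$, $\mathcal M,n,n''\Vdash\beta$ and $n'\approx_{\mathsf c}n''$ (resp. $n'\not\approx_{\mathsf c}n''$). Sequents: a sequent $\Gamma\vdash\Delta$ consists of finite (possibly empty) sets $\Gamma,\Delta$ of node expressions each of the form $\langle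 i{:}\blacktriangle j{:}\rangle$ or $@_i\varphi$. It is valid iff for every model $\mathcal M$ and node $n$, if $\mathcal M,n\Vdash\gamma$ for all $\gamma\in\Gamma$ then $\mathcal M,n\Vdash\delta$ for some $\delta\in\Delta$. Notation ''$\varphi,\Gamma$'' means $\{\varphi\}\cup\Gamma$. The calculus $\mathbf{G}$ (each rule written premisses $\Rightarrow$ conclusion): (Ax) axiom $\varphi,\Gamma\vdash\Delta,\varphi$ where $\varphi$ is of the form $@_ip$, $@_ij$ or $\langle i{:}=_{\mathsf c}j{:}\rangle$; ($\bot$) axiom $@_i\bot,\Gamma\vdash\Delta$; ($\to$L) $\Gamma\vdash\Delta,@_i\varphi$ and $@_i\psi,\Gamma\vdash\Delta$ $\Rightarrow$ $@_i(\varphi\to\psi),\Gamma\vdash\Delta$; ($\to$R) $@_i\varphi,\Gamma\vdash\Delta,@_i\psi\Rightarrow\Gamma\vdash\Delta,@_i(\varphi\to\psi)$; ($@$T) $@_ii,\Gamma\vdash\Delta\Rightarrow\Gamma\vdash\Delta$; ($@5$) $@_jk,@_ij,@_ik,\Gamma\vdash\Delta\Rightarrow @_ij,@_ik,\Gamma\vdash\Delta$; (Nom) $@_ij,\Gamma\vdash\Delta\Rightarrow\Gamma\vdash\Delta$, $j$ not in the conclusion; (S$_1$) $@_j\varphi,@_ij,@_i\varphi,\Gamma\vdash\Delta\Rightarrow @_ij,@_i\varphi,\Gamma\vdash\Delta$, $\varphi$ of the form $p$, $\bot$ or $\langle\mathsf a\rangle k$; (S$_2$) $@_i\langle\mathsf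 a\rangle k,@_jk,@_i\langle\mathsf a\rangle j,\Gamma\vdash\Delta\Rightarrow @_jk,@_i\langle\mathsf a\rangle j,\Gamma\vdash\Delta$; (S$_3$) $\langle j{:}=_{\mathsf c}k{:}\rangle,@_ij,\langle i{:}=_{\mathsf c}k{:}\rangle,\Gamma\vdash\Delta\Rightarrow @_ij,\langle i{:}=_{\mathsf c}k{:}\rangle,\Gamma\vdash\Delta$; ($@$L) $@_i\varphi,\Gamma\vdash\Delta\Rightarrow @_j@_i\varphi,\Gamma\vdash\Delta$; ($@$R) $\Gamma\vdash\Delta,@_i\varphi\Rightarrow\Gamma\vdash\Delta,@_j@_i\varphi$; ($\langle\mathsf a\rangle$L) $@_i\langle\mathsf a\rangle j,@_j\varphi,\Gamma\vdash\Delta\Rightarrow @_i\langle\mathsf a\rangle\varphi,\Gamma\vdash\Delta$, $j$ not in the conclusion; ($\langle\mathsf a\rangle$R) $@_i\langle\mathsf a\rangle j,\Gamma\vdash\Delta,@_i\langle\mathsf a\rangle\varphi,@_j\varphi\Rightarrow @_i\langle\mathsf a\rangle j,\Gamma\vdash\Delta,@_i\langle\mathsf a\rangle\varphi$; ($\langle\blacktriangle\rangle$L) $@_i\langle\alpha\rangle j,@_i\langle\beta\rangle k,\langle j{:}\blacktriangle k{:}\rangle,\Gamma\vdash\Delta\Rightarrow @_i\langle\alpha\blacktriangle\beta\rangle,\Gamma\vdash\Delta$, $j,k$ distinct and not in the conclusion; ($\langle\blacktriangle\rangle$R) $@_i\langle\alpha\rangle j,@_i\langle\beta\rangle k,\Gamma\vdash\Delta,@_i\langle\alpha\blacktriangle\beta\rangle,\langle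 j{:}\blacktriangle k{:}\rangle\Rightarrow @_i\langle\alpha\rangle j,@_i\langle\beta\rangle k,\Gamma\vdash\Delta,@_i\langle\alpha\blacktriangle\beta\rangle$; (EqT) $\langle i{:}=_{\mathsf c}i{:}\rangle,\Gamma\vdash\Delta\Rightarrow\Gamma\vdash\Delta$; (Eq5) $\langle j{:}=_{\mathsf c}k{:}\rangle,\langle i{:}=_{\mathsf c}j{:}\rangle,\langle i{:}=_{\mathsf c}k{:}\rangle,\Gamma\vdash\Delta\Rightarrow\langle i{:}=_{\mathsf c}j{:}\rangle,\langle i{:}=_{\mathsf c}k{:}\rangle,\Gamma\vdash\Delta$; (NEqL) $\Gamma\vdash\Delta,\langle i{:}=_{\mathsf c}j{:}\rangle\Rightarrow\langle i{:}\neq_{\mathsf c}j{:}\rangle,\Gamma\vdash\Delta$; (NEqR) $\langle i{:}=_{\mathsf c}j{:}\rangle,\Gamma\vdash\Delta\Rightarrow\Gamma\vdash\Delta,\langle i{:}\neq_{\mathsf c}j{:}\rangle$; (Cut) $\Gamma\vdash\Delta,\varphi$ and $\varphi,\Gamma'\vdash\Delta'\Rightarrow\Gamma,\Gamma'\vdash\Delta,\Delta'$; (WL) $\Gamma\vdash\Delta\Rightarrow\varphi,\Gamma\vdash\Delta$; (WR) $\Gamma\vdash\Delta\Rightarrow\Gamma\vdash\Delta,\varphi$. Here $@_i\langle\alpha\rangle j$ for a path $\alpha$ is understood via the abbreviations above. A derivation is a finite tree of sequents in which each non-leaf node is the conclusion of an instance of a rule of $\mathbf G$ whose premisses are its children.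 A sequent is provable in $\mathbf G$ if it is the root of a derivation all of whose leaves are instances of (Ax) or ($\bot$). *)

(* Defs.v *)
From Stdlib Require Import List.
Import ListNotations.
Set Implicit Arguments.

Section HXPathD.
Variables Mod Cmp : Type.

(* Prop = nat, Nom = nat (countably infinite, disjoint by constructors). *)
Inductive form : Type :=
  | FProp (p : nat)
  | FNom (i : nat)
  | FBot
  | FImp (phi psi : form)
  | FAt (i : nat) (phi : form)
  | FDia (a : Mod) (phi : form)
  | FEq (c : Cmp) (al be : path)
  | FNeq (c : Cmp) (al be : path)
with path : Type :=
  | PMod (a : Mod)
  | PNom (i : nat)
  | PTest (phi : form)
  | PSeq (al be : path).

Definition fNeg (phi : form) : form := FImp phi FBot.
Definition fAnd (phi psi : form) : form := fNeg (FImp phi (fNeg psi)).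

Fixpoint diam (al : path) (phi : form) : form :=
  match al with
  | PMod a => FDia a phi
  | PNom j => FAt j phi
  | PTest psi => fAnd psi phi
  | PSeq a1 a2 => diam a1 (diam a2 phi)
  end.

Definition cmpf (b : bool) (c : Cmp) (al be : path) : form :=
  if b then FEq c al be else FNeq c al be.

Definition eqn (c : Cmp) (i j : nat) : form := FEq c (PNom i) (PNom j).
Definition neqn (c : Cmp) (i j : nat) : form := FNeq c (PNom i) (PNom j).

Fixpoint noms_f (phi : form) : list nat :=
  match phi with
  | FProp _ | FBot => []
  | FNom i => [i]
  | FImp a b => noms_f a ++ noms_f b
  | FAt i a => i :: noms_f a
  | FDia _ a => noms_f a
  | FEq _ a b | FNeq _ a b => noms_p a ++ noms_p b
  end
with noms_p (al : path) : list nat :=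
  match al with
  | PMod _ => []
  | PNom i => [i]
  | PTest phi => noms_f phi
  | PSeq a b => noms_p a ++ noms_p b
  end.

Definition nom_in_seq (j : nat) (G D : list form) : Prop :=
  In j (flat_map noms_f (G ++ D)).

Record model : Type := Model {
  N : Type;
  n_inh : N;
  R : Mod -> N -> N -> Prop;
  E : Cmp -> N -> N -> Prop;
  E_refl : forall c x, E c x x;
  E_sym : forall c x y, E c x y -> E c y x;
  E_trans : forall c x y z, E c x y -> E c y z -> E c x z;
  g : nat -> N;
  V : nat -> N -> Prop
}.

Fixpoint fsat (M : model) (n : N M) (phi : form) {struct phi} : Prop :=
  match phi with
  | FProp p => V M p n
  | FNom i => g M i = n
  | FBot => False
  | FImp a b => fsat M n a -> fsat M n b
  | FAt i a => fsat M (g M i) a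
  | FDia a b => exists n', R M a n n' /\ fsat M n' b
  | FEq c al be => exists n' n'', psat M al n n' /\ psat M be n n'' /\ E M c n' n''
  | FNeq c al be => exists n' n'', psat M al n n' /\ psat M be n n'' /\ ~ E M c n' n''
  end
with psat (M : model) (al : path) (n n' : N M) {struct al} : Prop :=
  match al with
  | PMod a => R M a n n'
  | PNom i => g M i = n'
  | PTest phi => n = n' /\ fsat M n phi
  | PSeq a b => exists n'', psat M a n n'' /\ psat M b n'' n'
  end.

Definition seq_elem (phi : form) : Prop :=
  match phi with
  | FAt _ _ => True
  | FEq _ (PNom _) (PNom _) => True
  | FNeq _ (PNom _) (PNom _) => True
  | _ => False
  end.

Definition wf_sequent (G D : list form) : Prop :=
  (forall phi, In phi G -> seq_elem phi) /\ (forall phi, In phi D -> seq_elem phi).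

Definition valid_sequent (G D : list form) : Prop :=
  forall (M : model) (n : N M),
    (forall gam, In gam G -> fsat M n gam) -> exists del, In del D /\ fsat M n del.

Definition ax_form (phi : form) : Prop :=
  match phi with
  | FAt _ (FProp _) => True
  | FAt _ (FNom _) => True
  | FEq _ (PNom _) (PNom _) => True
  | _ => False
  end.

Definition s1_form (phi : form) : Prop :=
  match phi with
  | FProp _ | FBot => True
  | FDia _ (FNom _) => True
  | _ => False
  end.

Definition same_set (l1 l2 : list form) : Prop := forall x, In x l1 <-> In x l2.

(* The calculus G. Sequents are finite sets, represented by lists taken up to
   set equality (constructor G_set). *)
Inductive Gprov : list form -> list form -> Prop :=
  | G_Ax phi G D : ax_form phi -> Gprov (phi :: G) (phi :: D)
  | G_Bot i G D : Gprov (FAt i FBot :: G) D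
  | G_ImpL i phi psi G D :
      Gprov G (FAt i phi :: D) -> Gprov (FAt i psi :: G) D ->
      Gprov (FAt i (FImp phi psi) :: G) D
  | G_ImpR i phi psi G D :
      Gprov (FAt i phi :: G) (FAt i psi :: D) ->
      Gprov G (FAt i (FImp phi psi) :: D)
  | G_AtT i G D : Gprov (FAt i (FNom i) :: G) D -> Gprov G D
  | G_At5 i j k G D :
      Gprov (FAt j (FNom k) :: FAt i (FNom j) :: FAt i (FNom k) :: G) D ->
      Gprov (FAt i (FNom j) :: FAt i (FNom k) :: G) D
  | G_Nom i j G D :
      Gprov (FAt i (FNom j) :: G) D -> ~ nom_in_seq j G D -> Gprov G D
  | G_S1 i j phi G D : s1_form phi ->
      Gprov (FAt j phi :: FAt i (FNom j) :: FAt i phi :: G) D ->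
      Gprov (FAt i (FNom j) :: FAt i phi :: G) D
  | G_S2 i j k a G D :
      Gprov (FAt i (FDia a (FNom k)) :: FAt j (FNom k) :: FAt i (FDia a (FNom j)) :: G) D ->
      Gprov (FAt j (FNom k) :: FAt i (FDia a (FNom j)) :: G) D
  | G_S3 i j k c G D :
      Gprov (eqn c j k :: FAt i (FNom j) :: eqn c i k :: G) D ->
      Gprov (FAt i (FNom j) :: eqn c i k :: G) D
  | G_AtL i j phi G D :
      Gprov (FAt i phi :: G) D -> Gprov (FAt j (FAt i phi) :: G) D
  | G_AtR i j phi G D :
      Gprov G (FAt i phi :: D) -> Gprov G (FAt j (FAt i phi) :: D)
  | G_DiaL i j a phi G D :
      Gprov (FAt i (FDia a (FNom j)) :: FAt j phi :: G) D ->
      ~ nom_in_seq j (FAt i (FDia a phi) :: G) D ->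
      Gprov (FAt i (FDia a phi) :: G) D
  | G_DiaR i j a phi G D :
      Gprov (FAt i (FDia a (FNom j)) :: G) (FAt i (FDia a phi) :: FAt j phi :: D) ->
      Gprov (FAt i (FDia a (FNom j)) :: G) (FAt i (FDia a phi) :: D)
  | G_CmpL b c i j k al be G D :
      Gprov (FAt i (diam al (FNom j)) :: FAt i (diam be (FNom k)) :: cmpf b c (PNom j) (PNom k) :: G) D ->
      j <> k ->
      ~ nom_in_seq j (FAt i (cmpf b c al be) :: G) D ->
      ~ nom_in_seq k (FAt i (cmpf b c al be) :: G) D ->
      Gprov (FAt i (cmpf b c al be) :: G) D
  | G_CmpR b c i j k al be G D :
      Gprov (FAt i (diam al (FNom j)) :: FAt i (diam be (FNom k)) :: G)
            (FAt i (cmpf b c al be) :: cmpf b c (PNom j) (PNom k) :: D) ->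
      Gprov (FAt i (diam al (FNom j)) :: FAt i (diam be (FNom k)) :: G)
            (FAt i (cmpf b c al be) :: D)
  | G_EqT c i G D : Gprov (eqn c i i :: G) D -> Gprov G D
  | G_Eq5 c i j k G D :
      Gprov (eqn c j k :: eqn c i j :: eqn c i k :: G) D ->
      Gprov (eqn c i j :: eqn c i k :: G) D
  | G_NEqL c i j G D : Gprov G (eqn c i j :: D) -> Gprov (neqn c i j :: G) D
  | G_NEqR c i j G D : Gprov (eqn c i j :: G) D -> Gprov G (neqn c i j :: D)
  | G_Cut phi G D G' D' : seq_elem phi ->
      Gprov G (phi :: D) -> Gprov (phi :: G') D' -> Gprov (G ++ G') (D ++ D')
  | G_WL phi G D : seq_elem phi -> Gprov G D -> Gprov (phi :: G) D
  | G_WR phi G D : seq_elem phi -> Gprov G D -> Gprov G (phi :: D)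
  | G_set G D G' D' : Gprov G D -> same_set G G' -> same_set D D' -> Gprov G' D'.

End HXPathD.

(* Main.v *)
Require Import Defs.
From mathcomp Require Import ssreflect ssrbool eqtype fintype choice.
From Stdlib Require Import List Lia Classical ClassicalEpsilon FunctionalExtensionality PropExtensionality.
Import ListNotations.

Scheme form_mind := Induction for form Sort Prop
  with path_mind := Induction for path Sort Prop.

Section Enum.
Variables Mod Cmp : Type.
Variable encM : Mod -> nat.
Variable encC : Cmp -> nat.
Hypothesis encM_inj : forall a b, encM a = encM b -> a = b.
Hypothesis encC_inj : forall a b, encC a = encC b -> a = b.
Notation F := (form Mod Cmp).

Fixpoint encf (f : F) : GenTree.tree nat :=
  match f with
  | FProp p => GenTree.Node 0 [GenTree.Leaf p]
  | FNom i => GenTree.Node 1 [GenTree.Leaf i]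
  | FBot => GenTree.Node 2 []
  | FImp a b => GenTree.Node 3 [encf a; encf b]
  | FAt i a => GenTree.Node 4 [GenTree.Leaf i; encf a]
  | FDia a b => GenTree.Node 5 [GenTree.Leaf (encM a); encf b]
  | FEq c a b => GenTree.Node 6 [GenTree.Leaf (encC c); encp a; encp b]
  | FNeq c a b => GenTree.Node 7 [GenTree.Leaf (encC c); encp a; encp b]
  end
with encp (p : path Mod Cmp) : GenTree.tree nat :=
  match p with
  | PMod a => GenTree.Node 8 [GenTree.Leaf (encM a)]
  | PNom i => GenTree.Node 9 [GenTree.Leaf i]
  | PTest f => GenTree.Node 10 [encf f]
  | PSeq a b => GenTree.Node 11 [encp a; encp b]
  end.

Lemma enc_inj : forall f g, encf f = encf g -> f = g.
Proof.
  apply (@form_mind Mod Cmp (fun f => forall g, encf f = encf g -> f = g)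
                   (fun p => forall q, encp p = encp q -> p = q));
  intros; match goal with
          | [ |- _ = ?g ] => destruct g
          end; simpl in *; try discriminate;
  repeat match goal with
  | [ H : GenTree.Node _ _ = GenTree.Node _ _ |- _ ] => injection H; clear H; intros
  end; subst;
  repeat match goal with
  | [ H : encM _ = encM _ |- _ ] => apply encM_inj in H
  | [ H : encC _ = encC _ |- _ ] => apply encC_inj in H
  end; subst; f_equal; auto.
Qed.

Definition code (f : F) : nat := pickle (encf f).
Lemma code_inj f g : code f = code g -> f = g.
Proof.
  unfold code; intros H. apply enc_inj.
  exact (ssrfun.pcan_inj pickleK H).
Qed.

Definition en (n : nat) : F := epsilon (inhabits (FBot Mod Cmp)) (fun f => code f = n).
Lemma en_code f : en (code f) = f.
Proof.
  apply code_inj. unfold en. apply (epsilon_spec (inhabits (FBot Mod Cmp)) (fun g => code g = code f)).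
  exists f; reflexivity.
Qed.
End Enum.


Section Calc.
Variables Mod Cmp : Type.
Notation F := (form Mod Cmp).
Notation nm i := (FNom Mod Cmp i).
Notation bt := (FBot Mod Cmp).
Notation EQ c i j := (eqn Mod c i j).
Notation NEQ c i j := (neqn Mod c i j).

Definition allse (L : list F) := forall x, In x L -> seq_elem x.

Ltac reord := eapply G_set; [eassumption | intro; simpl; tauto | intro; simpl; tauto].

Lemma wkL_app (G' G D : list F) : allse G' -> Gprov G D -> Gprov (G' ++ G) D.
Proof.
  induction G' as [|a G' IH]; intros H1 H2; simpl; auto.
  apply G_WL. apply H1; simpl; auto. apply IH; auto. intros x Hx; apply H1; simpl; auto.
Qed.

Lemma wkR_app (D' G D : list F) : allse D' -> Gprov G D -> Gprov G (D' ++ D).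
Proof.
  induction D' as [|a D' IH]; intros H1 H2; simpl; auto.
  apply G_WR. apply H1; simpl; auto. apply IH; auto. intros x Hx; apply H1; simpl; auto.
Qed.

Lemma weak (G D G' D' : list F) : Gprov G D -> incl G G' -> incl D D' -> allse G' -> allse D' -> Gprov G' D'.
Proof.
  intros H HG HD A1 A2.
  eapply G_set. apply wkL_app; [exact A1|]. apply wkR_app; [exact A2|]. exact H.
  intro x; rewrite in_app_iff; split; [intros [?|?]; auto|auto].
  intro x; rewrite in_app_iff; split; [intros [?|?]; auto|auto].
Qed.

Lemma cutc (phi : F) (G D : list F) : seq_elem phi -> Gprov G (phi :: D) -> Gprov (phi :: G) D -> Gprov G D.
Proof.
  intros S H1 H2. eapply G_set. eapply G_Cut; eauto.
  intro x; rewrite in_app_iff; tauto.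
  intro x; rewrite in_app_iff; tauto.
Qed.

Fixpoint maxl (l : list nat) : nat := match l with [] => 0 | x :: r => Nat.max x (maxl r) end.
Lemma maxl_ge x l : In x l -> x <= maxl l.
Proof. induction l; simpl; intros H; [contradiction|]. destruct H; subst; [lia|]. specialize (IHl H); lia. Qed.

Definition fr (L : list F) := S (maxl (flat_map (@noms_f Mod Cmp) L)).
Lemma fr_notin (L : list F) j : fr L <= j -> ~ In j (flat_map (@noms_f Mod Cmp) L).
Proof. unfold fr; intros H H'. apply maxl_ge in H'. lia. Qed.

Lemma notin_sub (L1 L2 : list F) j : (forall x, In x L1 -> In x L2) ->
  ~ In j (flat_map (@noms_f Mod Cmp) L2) -> ~ In j (flat_map (@noms_f Mod Cmp) L1).
Proof.
  intros H H1 H2. apply H1. apply in_flat_map in H2. destruct H2 as [x [Hx Hj]].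
  apply in_flat_map. exists x; auto.
Qed.

Lemma nis_fresh j (G D L : list F) : fr L <= j -> (forall x, In x (G ++ D) -> In x L) -> ~ nom_in_seq j G D.
Proof. intros H1 H2. unfold nom_in_seq. eapply notin_sub; [exact H2|]. apply fr_notin; auto. Qed.

Lemma allse_cons (x : F) L : seq_elem x -> allse L -> allse (x :: L).
Proof. intros H1 H2 y [<-|Hy]; auto. Qed.
Lemma allse_nil : allse (@nil F).
Proof. intros y []. Qed.

Ltac se := repeat (apply allse_cons; [exact I|]); apply allse_nil.
Ltac incl_tac := intros ?; simpl; tauto.

Lemma id_neq (c : Cmp) j k : Gprov [NEQ c j k] [NEQ c j k].
Proof.
  apply G_NEqR. eapply G_set with (G := NEQ c j k :: [EQ c j k]).
  apply G_NEqL. apply (G_Ax (EQ c j k) [] []). exact I.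
  incl_tac. incl_tac.
Qed.

Lemma id_at : forall (phi : F) i, Gprov [FAt i phi] [FAt i phi].
Proof.
  induction phi as [| | | phi1 IHphi1 phi2 IHphi2 | i phi IHphi | a phi IHphi | c al be | c al be]; intros i0.
  - apply (G_Ax _ [] []); exact I.
  - apply (G_Ax _ [] []); exact I.
  - apply G_Bot.
  - apply G_ImpR. eapply G_set with (G := FAt i0 (FImp phi1 phi2) :: [FAt i0 phi1]) (D := [FAt i0 phi2]).
    apply G_ImpL.
    + eapply weak; [apply (IHphi1 i0)| incl_tac | incl_tac | se | se].
    + eapply weak; [apply (IHphi2 i0)| incl_tac | incl_tac | se | se].
    + incl_tac.
    + incl_tac.
  - apply G_AtR. apply G_AtL. apply IHphi.
  - set (j := fr [FAt i0 (FDia a phi)]).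
    apply (@G_DiaL _ _ i0 j a phi [] [FAt i0 (FDia a phi)]).
    + apply (@G_DiaR _ _ i0 j a phi [FAt j phi] []).
      eapply weak; [apply (IHphi j)| incl_tac | incl_tac | se | se].
    + eapply nis_fresh. apply le_n. incl_tac.
  - set (j := fr [FAt i0 (FEq c al be)]).
    apply (@G_CmpL _ _ true c i0 j (S j) al be [] [FAt i0 (FEq c al be)]).
    + apply (@G_CmpR _ _ true c i0 j (S j) al be [EQ c j (S j)] []).
      eapply G_set. apply (G_Ax (EQ c j (S j)) [FAt i0 (diam al (nm j)); FAt i0 (diam be (nm (S j)))] [FAt i0 (FEq c al be)]).
      exact I. incl_tac. incl_tac.
    + lia.
    + eapply nis_fresh. apply le_n. incl_tac.
    + eapply nis_fresh. apply le_S, le_n. incl_tac.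
  - set (j := fr [FAt i0 (FNeq c al be)]).
    apply (@G_CmpL _ _ false c i0 j (S j) al be [] [FAt i0 (FNeq c al be)]).
    + apply (@G_CmpR _ _ false c i0 j (S j) al be [NEQ c j (S j)] []).
      eapply weak; [apply (id_neq c j (S j))| incl_tac | incl_tac | se | se].
    + lia.
    + eapply nis_fresh. apply le_n. incl_tac.
    + eapply nis_fresh. apply le_S, le_n. incl_tac.
Qed.

Lemma id_se (phi : F) : seq_elem phi -> Gprov [phi] [phi].
Proof.
  destruct phi; simpl; intros H; try contradiction.
  - apply id_at.
  - destruct al; try contradiction; destruct be; try contradiction.
    apply (G_Ax _ [] []); exact I.
  - destruct al; try contradiction; destruct be; try contradiction.
    apply id_neq.
Qed.


Ltac incl2 := intros ?; simpl; rewrite ?in_app_iff; simpl; tauto.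

Lemma allse_app (L1 L2 : list F) : allse L1 -> allse L2 -> allse (L1 ++ L2).
Proof. intros H1 H2 x Hx; apply in_app_iff in Hx; destruct Hx; auto. Qed.

Variable en : nat -> F.
Hypothesis en_surj : forall f, exists n, en n = f.

Definition wit (psi : F) (L : list F) : list F :=
  match psi with
  | FAt i (FDia a phi) => [FAt i (FDia a (nm (fr L))); FAt (fr L) phi]
  | FAt i (FEq c al be) =>
      [FAt i (diam al (nm (fr L))); FAt i (diam be (nm (S (fr L)))); EQ c (fr L) (S (fr L))]
  | FAt i (FNeq c al be) =>
      [FAt i (diam al (nm (fr L))); FAt i (diam be (nm (S (fr L)))); NEQ c (fr L) (S (fr L))]
  | _ => []
  end.

Definition step (psi : F) (p : list F * list F) : list F * list F :=
  let (G, D) := p in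
  if excluded_middle_informative (seq_elem psi) then
    if excluded_middle_informative (Gprov (psi :: G) D) then (G, psi :: D)
    else (wit psi (psi :: G ++ D) ++ psi :: G, D)
  else (G, D).

Lemma wit_se psi L : allse (wit psi L).
Proof. destruct psi; try apply allse_nil; destruct psi; try apply allse_nil; simpl; se. Qed.

Lemma wit_cons psi G D : ~ Gprov (psi :: G) D -> ~ Gprov (wit psi (psi :: G ++ D) ++ psi :: G) D.
Proof.
  destruct psi as [| | | | i phi | | |]; simpl; auto.
  destruct phi as [| | | | | a phi | c al be | c al be]; simpl; auto; intros H1 H2; apply H1.
  - eapply G_set; [apply (@G_DiaL _ _ i _ a phi (FAt i (FDia a phi) :: G) D H2) | incl2 | incl2].
    eapply nis_fresh. apply le_n. incl2.
  - eapply G_set; [apply (@G_CmpL _ _ true c i _ _ al be (FAt i (FEq c al be) :: G) D H2) | incl2 | incl2].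
    lia. eapply nis_fresh. apply le_n. incl2. eapply nis_fresh. apply le_S, le_n. incl2.
  - eapply G_set; [apply (@G_CmpL _ _ false c i _ _ al be (FAt i (FNeq c al be) :: G) D H2) | incl2 | incl2].
    lia. eapply nis_fresh. apply le_n. incl2. eapply nis_fresh. apply le_S, le_n. incl2.
Qed.

Variables G0 D0 : list F.
Hypothesis G0se : allse G0.
Hypothesis D0se : allse D0.
Hypothesis G0D0 : ~ Gprov G0 D0.

Fixpoint stage (n : nat) : list F * list F :=
  match n with 0 => (G0, D0) | S n => step (en n) (stage n) end.

Lemma inv n : allse (fst (stage n)) /\ allse (snd (stage n)) /\ ~ Gprov (fst (stage n)) (snd (stage n)).
Proof.
  induction n as [|n IH]; simpl; auto.
  destruct (stage n) as [G D]; simpl in *. destruct IH as [A1 [A2 A3]].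
  destruct (excluded_middle_informative (seq_elem (en n))) as [Sx|Sx]; auto.
  destruct (excluded_middle_informative (Gprov (en n :: G) D)) as [P|P]; simpl.
  - split; auto. split. apply allse_cons; auto. intro H. apply A3. eapply cutc; eauto.
  - split. apply allse_app. apply wit_se. apply allse_cons; auto. split; auto.
    apply wit_cons; auto.
Qed.

Lemma mono1 n : incl (fst (stage n)) (fst (stage (S n))) /\ incl (snd (stage n)) (snd (stage (S n))).
Proof.
  simpl. destruct (stage n) as [G D]; simpl.
  destruct (excluded_middle_informative (seq_elem (en n))) as [Sx|Sx]; [|split; apply incl_refl].
  destruct (excluded_middle_informative (Gprov (en n :: G) D)) as [P|P]; simpl; split; intros x Hx; simpl; auto.
  apply in_app_iff; right; simpl; auto.
Qed.

Lemma mono n m : n <= m -> incl (fst (stage n)) (fst (stage m)) /\ incl (snd (stage n)) (snd (stage m)).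
Proof.
  induction 1 as [|m H IH]. split; apply incl_refl.
  destruct IH; destruct (mono1 m); split; eapply incl_tran; eauto.
Qed.

Definition Ga (x : F) := exists n, In x (fst (stage n)).
Definition De (x : F) := exists n, In x (snd (stage n)).

Lemma coverG G : (forall x, In x G -> Ga x) -> exists n, incl G (fst (stage n)).
Proof.
  induction G as [|a G IH]; intros H. exists 0; intros x [].
  destruct IH as [n Hn]. intros; apply H; simpl; auto.
  destruct (H a) as [m Hm]. simpl; auto.
  exists (Nat.max n m). intros x [<-|Hx].
  - apply (proj1 (mono m (Nat.max n m) ltac:(lia))); auto.
  - apply (proj1 (mono n (Nat.max n m) ltac:(lia))); auto.
Qed.

Lemma coverD D : (forall x, In x D -> De x) -> exists n, incl D (snd (stage n)).
Proof.
  induction D as [|a D IH]; intros H. exists 0; intros x [].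
  destruct IH as [n Hn]. intros; apply H; simpl; auto.
  destruct (H a) as [m Hm]. simpl; auto.
  exists (Nat.max n m). intros x [<-|Hx].
  - apply (proj2 (mono m (Nat.max n m) ltac:(lia))); auto.
  - apply (proj2 (mono n (Nat.max n m) ltac:(lia))); auto.
Qed.

Lemma Gcons G D : (forall x, In x G -> Ga x) -> (forall x, In x D -> De x) -> ~ Gprov G D.
Proof.
  intros H1 H2 P. destruct (coverG G H1) as [n Hn]. destruct (coverD D H2) as [m Hm].
  destruct (inv (Nat.max n m)) as [A1 [A2 A3]]. apply A3.
  eapply weak; [exact P | | | exact A1 | exact A2].
  eapply incl_tran; [exact Hn|]. apply (proj1 (mono n (Nat.max n m) ltac:(lia))).
  eapply incl_tran; [exact Hm|]. apply (proj2 (mono m (Nat.max n m) ltac:(lia))).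
Qed.

Lemma Ga_se x : Ga x -> seq_elem x.
Proof. intros [n Hn]. exact (proj1 (inv n) x Hn). Qed.

Lemma maxi x : seq_elem x -> Ga x \/ De x.
Proof.
  intros Sx. destruct (en_surj x) as [n Hn].
  destruct (stage n) as [G D] eqn:E.
  assert (Hs : stage (S n) = step x (G, D)) by (simpl; rewrite E Hn; reflexivity).
  unfold step in Hs.
  destruct (excluded_middle_informative (seq_elem x)) as [S'|S']; [|contradiction].
  destruct (excluded_middle_informative (Gprov (x :: G) D)) as [P|P].
  - right; exists (S n); rewrite Hs; simpl; auto.
  - left; exists (S n); rewrite Hs; simpl; apply in_app_iff; right; simpl; auto.
Qed.

Lemma disj x : Ga x -> De x -> False.
Proof.
  intros H1 H2. apply (Gcons [x] [x]).
  intros y [<-|[]]; auto. intros y [<-|[]]; auto. apply id_se, Ga_se; auto.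
Qed.

Lemma derive G D : (forall x, In x G -> Ga x) -> allse D -> Gprov G D -> exists x, In x D /\ Ga x.
Proof.
  intros H1 H2 P. apply NNPP; intro H. apply (Gcons G D); auto.
  intros x Hx. destruct (maxi x (H2 x Hx)); auto. exfalso; apply H; eauto.
Qed.

Lemma derive1 G phi : (forall x, In x G -> Ga x) -> seq_elem phi -> Gprov G [phi] -> Ga phi.
Proof.
  intros H1 H2 P. destruct (derive G [phi] H1) as [x [[<-|[]] Hx]]; auto.
  intros y [<-|[]]; auto.
Qed.

Lemma wit_in psi : Ga psi -> exists L, forall x, In x (wit psi L) -> Ga x.
Proof.
  intros HG. pose proof (Ga_se _ HG) as Sx. destruct (en_surj psi) as [n Hn].
  destruct (stage n) as [G D] eqn:E.
  assert (Hs : stage (S n) = step psi (G, D)) by (simpl; rewrite E Hn; reflexivity).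
  unfold step in Hs.
  destruct (excluded_middle_informative (seq_elem psi)) as [S'|S']; [|contradiction].
  destruct (excluded_middle_informative (Gprov (psi :: G) D)) as [P|P].
  - exfalso. destruct HG as [m Hm]. apply (Gcons (psi :: G) D); auto.
    + intros x [<-|Hx]. exists m; auto. exists n; rewrite E; auto.
    + intros x Hx. exists n; rewrite E; auto.
  - exists (psi :: G ++ D). intros x Hx. exists (S n). rewrite Hs; simpl. apply in_app_iff; auto.
Qed.

Lemma wdia i a phi : Ga (FAt i (FDia a phi)) -> exists j, Ga (FAt i (FDia a (nm j))) /\ Ga (FAt j phi).
Proof.
  intros H. destruct (wit_in _ H) as [L HL]. simpl in HL. exists (fr L); split; apply HL; simpl; auto.
Qed.

Lemma wcmp b c i al be : Ga (FAt i (cmpf b c al be)) ->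
  exists j k, Ga (FAt i (diam al (nm j))) /\ Ga (FAt i (diam be (nm k))) /\
              Ga (cmpf b c (PNom Mod Cmp j) (PNom Mod Cmp k)).
Proof.
  intros H. destruct (wit_in _ H) as [L HL]. exists (fr L), (S (fr L)).
  destruct b; simpl in HL; repeat split; apply HL; simpl; auto.
Qed.


Ltac allin := let x := fresh in let H := fresh in intros x H; simpl in H;
  repeat (destruct H as [H|H]; [subst x; assumption|]); contradiction.
Ltac wid t := eapply weak; [exact t | incl_tac | incl_tac | se | se].

Lemma at_refl i : Ga (FAt i (nm i)).
Proof. apply (derive1 []); [allin | exact I|]. apply G_AtT with (i := i). apply (G_Ax _ [] []); exact I. Qed.

Lemma at5 i j k : Ga (FAt i (nm j)) -> Ga (FAt i (nm k)) -> Ga (FAt j (nm k)).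
Proof.
  intros H1 H2. apply (derive1 [FAt i (nm j); FAt i (nm k)]); [allin | exact I|].
  apply G_At5. apply (G_Ax _ _ []); exact I.
Qed.

Lemma at_sym i j : Ga (FAt i (nm j)) -> Ga (FAt j (nm i)).
Proof. intros H. apply (at5 i j i H (at_refl i)). Qed.

Lemma at_trans i j k : Ga (FAt i (nm j)) -> Ga (FAt j (nm k)) -> Ga (FAt i (nm k)).
Proof. intros H1 H2. apply (at5 j i k (at_sym _ _ H1) H2). Qed.

Lemma nbot i : ~ Ga (FAt i bt).
Proof.
  intros H. destruct (derive [FAt i bt] []) as [x [[] _]]; [allin | apply allse_nil |].
  apply G_Bot.
Qed.

Lemma imp_iff i phi psi : Ga (FAt i (FImp phi psi)) <-> (Ga (FAt i phi) -> Ga (FAt i psi)).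
Proof.
  split.
  - intros H1 H2. apply (derive1 [FAt i (FImp phi psi); FAt i phi]); [allin | exact I|].
    apply G_ImpL. wid (id_at phi i). wid (id_at psi i).
  - intros H. destruct (classic (Ga (FAt i phi))) as [H1|H1].
    + specialize (H H1). apply (derive1 [FAt i psi]); [allin | exact I|].
      apply G_ImpR. wid (id_at psi i).
    + destruct (derive [] [FAt i (FImp phi psi); FAt i phi]) as [x [Hx Hg]]; [allin | se | |].
      apply G_ImpR. wid (id_at phi i).
      destruct Hx as [<-|[<-|[]]]; auto. contradiction.
Qed.

Lemma and_iff i phi psi : Ga (FAt i (fAnd phi psi)) <-> Ga (FAt i phi) /\ Ga (FAt i psi).
Proof.
  unfold fAnd, fNeg. rewrite imp_iff. rewrite imp_iff. rewrite imp_iff.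
  pose proof (nbot i). split.
  - intros H1. destruct (classic (Ga (FAt i phi))); destruct (classic (Ga (FAt i psi))); tauto.
  - tauto.
Qed.

Lemma atat i j phi : Ga (FAt j (FAt i phi)) <-> Ga (FAt i phi).
Proof.
  split; intros H.
  - apply (derive1 [FAt j (FAt i phi)]); [allin | exact I|]. apply G_AtL. apply id_at.
  - apply (derive1 [FAt i phi]); [allin | exact I|]. apply G_AtR. apply id_at.
Qed.

Lemma diaR i j a phi : Ga (FAt i (FDia a (nm j))) -> Ga (FAt j phi) -> Ga (FAt i (FDia a phi)).
Proof.
  intros H1 H2. apply (derive1 [FAt i (FDia a (nm j)); FAt j phi]); [allin | exact I|].
  apply (@G_DiaR _ _ i j a phi [FAt j phi] []). wid (id_at phi j).
Qed.

Lemma cmpR b c i j k al be : Ga (FAt i (diam al (nm j))) -> Ga (FAt i (diam be (nm k))) ->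
  Ga (cmpf b c (PNom Mod Cmp j) (PNom Mod Cmp k)) -> Ga (FAt i (cmpf b c al be)).
Proof.
  intros H1 H2 H3.
  apply (derive1 [FAt i (diam al (nm j)); FAt i (diam be (nm k)); cmpf b c (PNom Mod Cmp j) (PNom Mod Cmp k)]);
    [allin | exact I|].
  apply (@G_CmpR _ _ b c i j k al be [cmpf b c (PNom Mod Cmp j) (PNom Mod Cmp k)] []).
  destruct b; simpl.
  - eapply G_set; [apply (G_Ax (EQ c j k) [FAt i (diam al (nm j)); FAt i (diam be (nm k))] [FAt i (FEq c al be)]); exact I | incl_tac | incl_tac].
  - wid (id_neq c j k).
Qed.

Lemma eq_refl' c i : Ga (EQ c i i).
Proof. apply (derive1 []); [allin | exact I|]. apply G_EqT with (c := c) (i := i). apply (G_Ax _ [] []); exact I. Qed.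

Lemma eq5 c i j k : Ga (EQ c i j) -> Ga (EQ c i k) -> Ga (EQ c j k).
Proof.
  intros H1 H2. apply (derive1 [EQ c i j; EQ c i k]); [allin | exact I|].
  apply G_Eq5. apply (G_Ax _ _ []); exact I.
Qed.

Lemma eq_sym' c i j : Ga (EQ c i j) -> Ga (EQ c j i).
Proof. intros H. apply (eq5 c i j i H (eq_refl' c i)). Qed.

Lemma eq_trans' c i j k : Ga (EQ c i j) -> Ga (EQ c j k) -> Ga (EQ c i k).
Proof. intros H1 H2. apply (eq5 c j i k (eq_sym' _ _ _ H1) H2). Qed.

Lemma neq_iff c i j : Ga (NEQ c i j) <-> ~ Ga (EQ c i j).
Proof.
  split.
  - intros H1 H2. destruct (derive [NEQ c i j; EQ c i j] []) as [x [[] _]]; [allin | apply allse_nil |].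
    apply G_NEqL. apply (G_Ax _ [] []); exact I.
  - intros H. destruct (derive [] [NEQ c i j; EQ c i j]) as [x [Hx Hg]]; [allin | se | |].
    apply G_NEqR. apply (G_Ax _ [] []); exact I.
    destruct Hx as [<-|[<-|[]]]; auto. contradiction.
Qed.

Lemma s1p i j p : Ga (FAt i (nm j)) -> Ga (FAt i (FProp Mod Cmp p)) -> Ga (FAt j (FProp Mod Cmp p)).
Proof.
  intros H1 H2. apply (derive1 [FAt i (nm j); FAt i (FProp Mod Cmp p)]); [allin | exact I|].
  apply G_S1. exact I. apply (G_Ax _ _ []); exact I.
Qed.

Lemma s1dia i j a k : Ga (FAt i (nm j)) -> Ga (FAt i (FDia a (nm k))) -> Ga (FAt j (FDia a (nm k))).
Proof.
  intros H1 H2. apply (derive1 [FAt i (nm j); FAt i (FDia a (nm k))]); [allin | exact I|].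
  apply G_S1. exact I. wid (id_at (FDia a (nm k)) j).
Qed.

Lemma s2 i j k a : Ga (FAt j (nm k)) -> Ga (FAt i (FDia a (nm j))) -> Ga (FAt i (FDia a (nm k))).
Proof.
  intros H1 H2. apply (derive1 [FAt j (nm k); FAt i (FDia a (nm j))]); [allin | exact I|].
  apply G_S2. wid (id_at (FDia a (nm k)) i).
Qed.

Lemma s3 i j k c : Ga (FAt i (nm j)) -> Ga (EQ c i k) -> Ga (EQ c j k).
Proof.
  intros H1 H2. apply (derive1 [FAt i (nm j); EQ c i k]); [allin | exact I|].
  apply G_S3. apply (G_Ax _ _ []); exact I.
Qed.


Definition TR (phi : F) := forall m k, Ga (FAt m (nm k)) -> Ga (FAt k phi) -> Ga (FAt m phi).

Lemma tr_dia a phi : TR (FDia a phi).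
Proof.
  intros m k Hmk Hk. destruct (wdia _ _ _ Hk) as [j [H1 H2]].
  apply (diaR m j); auto. apply (s1dia k m a j); auto. apply at_sym; auto.
Qed.

Lemma tr_nom j : TR (nm j).
Proof. intros m k H1 H2. eapply at_trans; eauto. Qed.

Lemma tr : forall phi, TR phi.
Proof.
  apply (@form_mind Mod Cmp TR (fun al => forall psi, TR psi -> TR (diam al psi))).
  - intros p m k H1 H2. apply (s1p k m p); auto. apply at_sym; auto.
  - apply tr_nom.
  - intros m k H1 H2. exfalso; apply (nbot k); auto.
  - intros phi IH1 psi IH2 m k H1 H2. apply imp_iff. intros H3.
    apply (IH2 m k H1). apply (proj1 (imp_iff k phi psi) H2). apply (IH1 k m); auto. apply at_sym; auto.
  - intros i phi IH m k H1 H2. apply atat. apply atat in H2. auto.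
  - intros a phi _. apply tr_dia.
  - intros c al IHal be IHbe m k H1 H2.
    change (Ga (FAt k (cmpf true c al be))) in H2.
    destruct (wcmp _ _ _ _ _ H2) as [j [l [H3 [H4 H5]]]].
    apply (cmpR true c m j l); auto.
    apply (IHal _ (tr_nom j) m k); auto. apply (IHbe _ (tr_nom l) m k); auto.
  - intros c al IHal be IHbe m k H1 H2.
    change (Ga (FAt k (cmpf false c al be))) in H2.
    destruct (wcmp _ _ _ _ _ H2) as [j [l [H3 [H4 H5]]]].
    apply (cmpR false c m j l); auto.
    apply (IHal _ (tr_nom j) m k); auto. apply (IHbe _ (tr_nom l) m k); auto.
  - intros a psi _. apply tr_dia.
  - intros n psi _ m k H1 H2. simpl in *. apply atat. apply atat in H2. auto.
  - intros chi IH psi Hpsi m k H1 H2. simpl in *. apply and_iff. apply and_iff in H2.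
    destruct H2; split; [apply (IH m k)|apply (Hpsi m k)]; auto.
  - intros a1 IH1 a2 IH2 psi Hpsi. simpl. apply IH1. apply IH2. auto.
Qed.

Lemma Ldiam : forall al i phi, Ga (FAt i (diam al phi)) <-> exists k, Ga (FAt i (diam al (nm k))) /\ Ga (FAt k phi).
Proof.
  induction al as [a | n | chi | a1 IH1 a2 IH2]; intros i phi; simpl.
  - split. apply wdia. intros [k [H1 H2]]. eapply diaR; eauto.
  - rewrite atat. split.
    + intros H. exists n. rewrite atat. split; auto. apply at_refl.
    + intros [k [H1 H2]]. rewrite atat in H1. apply (tr phi n k); auto.
  - rewrite and_iff. split.
    + intros [H1 H2]. exists i. rewrite and_iff. split; auto. split; auto. apply at_refl.
    + intros [k [H1 H2]]. rewrite and_iff in H1. destruct H1. split; auto. apply (tr phi i k); auto.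
  - rewrite IH1. split.
    + intros [k [H1 H2]]. rewrite IH2 in H2. destruct H2 as [l [H3 H4]].
      exists l. split; auto. apply IH1. exists k; auto.
    + intros [l [H1 H2]]. rewrite IH1 in H1. destruct H1 as [k [H3 H4]].
      exists k. split; auto. apply IH2. exists l; auto.
Qed.

Definition cg (i : nat) : nat -> Prop := fun k => Ga (FAt i (nm k)).

Lemma gE i j : cg i = cg j <-> Ga (FAt i (nm j)).
Proof.
  split.
  - intros H. assert (H1 : cg j j) by apply at_refl. rewrite <- H in H1. exact H1.
  - intros H. apply functional_extensionality. intros k. apply propositional_extensionality.
    unfold cg. split; intros H1.
    + apply (at_trans j i k); auto. apply at_sym; auto.
    + apply (at_trans i j k); auto.
Qed.

Definition cR (a : Mod) (X Y : nat -> Prop) := exists i j, X = cg i /\ Y = cg j /\ Ga (FAt i (FDia a (nm j))).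
Definition cE (c : Cmp) (X Y : nat -> Prop) := X = Y \/ exists i j, X = cg i /\ Y = cg j /\ Ga (EQ c i j).
Definition cV (p : nat) (X : nat -> Prop) := exists i, X = cg i /\ Ga (FAt i (FProp Mod Cmp p)).

Lemma eq_cong c i j i' j' : Ga (EQ c i j) -> cg i = cg i' -> cg j = cg j' -> Ga (EQ c i' j').
Proof.
  intros H H1 H2. apply gE in H1. apply gE in H2.
  apply eq_sym'. apply (s3 j j' i'); auto. apply eq_sym'. apply (s3 i i' j); auto.
Qed.

Lemma cE_refl c X : cE c X X.
Proof. left; reflexivity. Qed.
Lemma cE_sym c X Y : cE c X Y -> cE c Y X.
Proof.
  intros [H|[i [j [H1 [H2 H3]]]]]. left; auto. right; exists j, i; split; auto; split; auto. apply eq_sym'; auto.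
Qed.
Lemma cE_trans c X Y Z : cE c X Y -> cE c Y Z -> cE c X Z.
Proof.
  intros [H|[i [j [H1 [H2 H3]]]]] [H'|[i' [j' [H1' [H2' H3']]]]].
  - left; congruence.
  - right; exists i', j'; subst; auto.
  - right; exists i, j; subst; auto.
  - right; exists i, j'. split; auto. split; auto. apply (eq_trans' c i i' j'); auto.
    apply (eq_cong c i j i i'); auto. congruence.
Qed.

Definition M : model Mod Cmp :=
  @Model Mod Cmp (nat -> Prop) (cg 0) cR cE cE_refl cE_sym cE_trans cg cV.

Lemma Echar c j k : cE c (cg j) (cg k) <-> Ga (EQ c j k).
Proof.
  split.
  - intros [H|[i' [j' [H1 [H2 H3]]]]].
    + apply (eq_cong c j j j k); auto. apply eq_refl'.
    + apply (eq_cong c i' j' j k); auto.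
  - intros H; right; exists j, k; auto.
Qed.

Lemma truth : forall phi i, fsat M (cg i) phi <-> Ga (FAt i phi).
Proof.
  apply (@form_mind Mod Cmp (fun phi => forall i, fsat M (cg i) phi <-> Ga (FAt i phi))
    (fun al => forall i Y, psat M al (cg i) Y <-> exists j, Y = cg j /\ Ga (FAt i (diam al (nm j))))); simpl.
  - intros p i. split.
    + intros [i' [H1 H2]]. apply gE in H1. apply (tr _ i i'); auto.
    + intros H; exists i; auto.
  - intros j i. rewrite gE. split; apply at_sym.
  - intros i. split. tauto. apply nbot.
  - intros phi IH1 psi IH2 i. rewrite imp_iff. split; intros H H'.
    apply IH2, H, IH1, H'. apply IH2, H, IH1, H'.
  - intros j phi IH i. rewrite atat. apply IH.
  - intros a phi IH i. split.
    + intros [Y [[i' [j [H1 [H2 H3]]]] H4]]. subst Y. apply IH in H4.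
      apply gE in H1. apply (diaR i j); auto. apply (tr _ i i'); auto.
    + intros H. destruct (wdia _ _ _ H) as [j [H1 H2]]. exists (cg j). split.
      exists i, j; auto. apply IH; auto.
  - intros c al IHal be IHbe i. split.
    + intros [Y [Z [H1 [H2 H3]]]]. apply IHal in H1. apply IHbe in H2.
      destruct H1 as [j [-> Hj]]. destruct H2 as [k [-> Hk]].
      apply (cmpR true c i j k); auto. apply Echar; auto.
    + intros H. destruct (wcmp true c i al be H) as [j [k [H1 [H2 H3]]]].
      exists (cg j), (cg k). split. apply IHal; eauto. split. apply IHbe; eauto. apply Echar; auto.
  - intros c al IHal be IHbe i. split.
    + intros [Y [Z [H1 [H2 H3]]]]. apply IHal in H1. apply IHbe in H2.
      destruct H1 as [j [-> Hj]]. destruct H2 as [k [-> Hk]].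
      apply (cmpR false c i j k); auto. simpl. apply neq_iff. rewrite <- Echar. auto.
    + intros H. destruct (wcmp false c i al be H) as [j [k [H1 [H2 H3]]]].
      exists (cg j), (cg k). split. apply IHal; eauto. split. apply IHbe; eauto.
      simpl in H3. apply neq_iff in H3. rewrite Echar. auto.
  - intros a i Y. split.
    + intros [i' [j [H1 [H2 H3]]]]. exists j. split; auto. apply gE in H1. apply (tr _ i i'); auto.
    + intros [j [H1 H2]]. exists i, j; auto.
  - intros n i Y. split.
    + intros <-. exists n. split; auto. apply atat, at_refl.
    + intros [j [-> H]]. apply atat in H. apply gE; auto.
  - intros chi IH i Y. split.
    + intros [<- H]. exists i. split; auto. apply and_iff. split. apply IH; auto. apply at_refl.
    + intros [j [-> H]]. apply and_iff in H. destruct H as [H1 H2]. split. apply gE; auto. apply IH; auto.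
  - intros a1 IH1 a2 IH2 i Y. split.
    + intros [Z [H1 H2]]. apply IH1 in H1. destruct H1 as [k [-> Hk]].
      apply IH2 in H2. destruct H2 as [j [-> Hj]]. exists j. split; auto.
      apply Ldiam. exists k; auto.
    + intros [j [-> H]]. apply Ldiam in H. destruct H as [k [H1 H2]].
      exists (cg k). split. apply IH1; eauto. apply IH2; eauto.
Qed.

Lemma seq_truth (x : F) X : seq_elem x -> (fsat M X x <-> Ga x).
Proof.
  destruct x; simpl; intros H; try contradiction.
  - apply truth.
  - destruct al; try contradiction; destruct be; try contradiction. simpl.
    transitivity (cE c (cg i) (cg i0)); [|apply Echar]. split. intros [Y [Z [<- [<- H3]]]]; auto. intros H1; exists (cg i), (cg i0); auto.
  - destruct al; try contradiction; destruct be; try contradiction. simpl.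
    transitivity (Ga (NEQ c i i0)); [|reflexivity]. rewrite neq_iff.
    transitivity (~ cE c (cg i) (cg i0)); [|rewrite Echar; reflexivity].
    split. intros [Y [Z [<- [<- H3]]]]; auto. intros H1; exists (cg i), (cg i0); auto.
Qed.

Lemma final : valid_sequent G0 D0 -> False.
Proof.
  intros Hv. destruct (Hv M (cg 0)) as [d [Hd Hs]].
  - intros x Hx. apply seq_truth. apply G0se; auto. exists 0; simpl; auto.
  - apply seq_truth in Hs; [|apply D0se; auto]. apply (disj d); auto. exists 0; simpl; auto.
Qed.

End Calc.

Lemma completeness (Mod Cmp : Type) (en : nat -> form Mod Cmp) (en_surj : forall f, exists n, en n = f)
  (G D : list (form Mod Cmp)) : allse Mod Cmp G -> allse Mod Cmp D -> valid_sequent G D -> Gprov G D.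
Proof.
  intros H1 H2 H3. apply NNPP. intros H4. exact (@final Mod Cmp en en_surj G D H1 H2 H4 H3).
Qed.

Theorem theorem3 (Mod Cmp : finType) (G D : list (form Mod Cmp)) :
  wf_sequent G D -> valid_sequent G D -> Gprov G D.
Proof.
  intros [H1 H2] H3.
  apply (@completeness Mod Cmp (@en Mod Cmp (fun a : Mod => pickle a) (fun c : Cmp => pickle c))); auto.
  intros f. exists (@code Mod Cmp (fun a : Mod => pickle a) (fun c : Cmp => pickle c) f).
  apply en_code.
  - intros a b H. exact (ssrfun.pcan_inj pickleK H).
  - intros a b H. exact (ssrfun.pcan_inj pickleK H).
Qed.
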